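(* Let $n\ge4$, $0<\alpha_2,\alpha_3<1$, $\alpha_1=1-\alpha_2-\alpha_3$, $\lambda^*=\big(\frac{n-1+\alpha_1}{n},\frac{\alpha_2}{n},\frac{\alpha_3}{n}\big)$. Define $$\sigma_1=\sum_{i_1=0}^{n-4}\Big(\sum_{i_2=1}^{\lfloor (n-i_1-1)/2\rfloor}|l_{(i_1,i_2,n-i_1-i_2)}(\lambda^* )|+\frac{1-\varepsilon(i_1)}{2}\mathfrak{p}(i_1)\Big),$$ $$\sigma_2=\sum_{i_1=0}^{n-4}\Big(\sum_{i_3=1}^{\lfloor (n-i_1-1)/2\rfloor}|l_{(i_1,n-i_1-i_3,i_3)}(\lambda^* )|+\frac{1-\varepsilon(i_1)}{2}\mathfrak{p}(i_1)\Big).$$ Then for $s=1,2$, $$\sigma_s\le\frac{C_0}{e(\ln n-1)}\sum_{i_1=0}^{n-4}\binom{n}{n-i_1}\frac{1}{n-i_1-1},\qquad C_0=\frac{(\ln2)^2+12\ln2+28}{4\ln2+12}<2.5.$$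
   Context: For an integer $n\ge1$ let $I=\{i=(i_1,i_2,i_3)\in\mathbb{Z}_+^3: i_1+i_2+i_3=n\}$ and $l_i(\lambda)=\prod_{s=1}^{3}\frac{1}{i_s!}\prod_{t=0}^{i_s-1}(n\lambda_s-t)$ for $\lambda=(\lambda_1,\lambda_2,\lambda_3)$ (Lagrange fundamental polynomials for the equally spaced nodes $i/n$ of a triangle in barycentric coordinates). For an integer $i_1$, $\varepsilon(i_1)=0$ if $n-i_1$ is even and $\varepsilon(i_1)=1$ otherwise; when $n-i_1$ is even, $\mathfrak{p}(i_1)=|l_i(\lambda^* )|$ with $i=\big(i_1,\frac{n-i_1}{2},\frac{n-i_1}{2}\big)$ (the term with factor $1-\varepsilon(i_1)=0$ is absent when $n-i_1$ is odd). *)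

(* Defs.v *)
From Stdlib Require Import Reals Lra Lia List Arith.
Open Scope R_scope.

(* rsum lo hi f = sum_{i = lo}^{hi} f i  (empty, i.e. 0, if hi < lo) *)
Definition rsum (lo hi : nat) (f : nat -> R) : R :=
  fold_right (fun i acc => f i + acc) 0 (List.seq lo (S hi - lo)).

Definition rprod (lo hi : nat) (f : nat -> R) : R :=
  fold_right (fun i acc => f i * acc) 1 (List.seq lo (S hi - lo)).

Definition lfactor (k : nat) (x : R) : R :=
  / INR (fact k) * rprod 0 (k - 1) (fun t => x - INR t) .

(* Careful: for k = 0 the product must be empty. *)
Definition lfac (k : nat) (x : R) : R :=
  match k with
  | O => 1
  | S _ => lfactor k x
  end.

(* Lagrange fundamental polynomial l_i(lambda), i = (i1,i2,i3), nodes i/n *)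
Definition lagr (n i1 i2 i3 : nat) (l1 l2 l3 : R) : R :=
  lfac i1 (INR n * l1) * lfac i2 (INR n * l2) * lfac i3 (INR n * l3).

Definition eps (n i1 : nat) : R := if Nat.even (n - i1) then 0 else 1.

(* pfrak(i1) = |l_{(i1,(n-i1)/2,(n-i1)/2)}(lambda)| (only used with factor
   1 - eps(i1), which vanishes when n - i1 is odd) *)
Definition pfrak (n i1 : nat) (l1 l2 l3 : R) : R :=
  Rabs (lagr n i1 ((n - i1) / 2) ((n - i1) / 2) l1 l2 l3).

Definition sigma1 (n : nat) (l1 l2 l3 : R) : R :=
  rsum 0 (n - 4) (fun i1 =>
    rsum 1 ((n - i1 - 1) / 2) (fun i2 => Rabs (lagr n i1 i2 (n - i1 - i2) l1 l2 l3))
    + (1 - eps n i1) / 2 * pfrak n i1 l1 l2 l3).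

Definition sigma2 (n : nat) (l1 l2 l3 : R) : R :=
  rsum 0 (n - 4) (fun i1 =>
    rsum 1 ((n - i1 - 1) / 2) (fun i3 => Rabs (lagr n i1 (n - i1 - i3) i3 l1 l2 l3))
    + (1 - eps n i1) / 2 * pfrak n i1 l1 l2 l3).

Definition C0 : R := ((ln 2) ^ 2 + 12 * ln 2 + 28) / (4 * ln 2 + 12).

Definition bound_rhs (n : nat) : R :=
  C0 / (exp 1 * (ln (INR n) - 1)) *
  rsum 0 (n - 4) (fun i1 => Binomial.C n (n - i1) * / INR (n - i1 - 1)).

(* Main.v *)
Require Import Defs.
From Stdlib Require Import Reals Lra Lia List Arith.
Open Scope R_scope.


Lemma fold_le (f g : nat -> R) (l : list nat) :
  (forall i, In i l -> f i <= g i) ->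
  fold_right (fun i acc => f i + acc) 0 l <= fold_right (fun i acc => g i + acc) 0 l.
Proof.
  induction l as [|x l IH]; simpl; intros H; [lra|].
  assert (f x <= g x) by auto. assert (fold_right (fun i acc => f i + acc) 0 l <= fold_right (fun i acc => g i + acc) 0 l) by auto. lra.
Qed.

Lemma rsum_le (lo hi : nat) (f g : nat -> R) :
  (forall i, (lo <= i <= hi)%nat -> f i <= g i) -> rsum lo hi f <= rsum lo hi g.
Proof.
  intros H; unfold rsum; apply fold_le; intros i Hi; apply in_seq in Hi; apply H; lia.
Qed.

Lemma fold_scal (c : R) (f : nat -> R) (l : list nat) :
  c * fold_right (fun i acc => f i + acc) 0 l = fold_right (fun i acc => c * f i + acc) 0 l.
Proof. induction l as [|x l IH]; simpl; [ring|]. rewrite <- IH; ring. Qed.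

Lemma rsum_scal (c : R) lo hi f : c * rsum lo hi f = rsum lo hi (fun i => c * f i).
Proof. apply fold_scal. Qed.

Lemma fold_app1 (f : nat -> R) (l : list nat) x :
  fold_right (fun i acc => f i + acc) 0 (l ++ x :: nil) = fold_right (fun i acc => f i + acc) 0 l + f x.
Proof. induction l as [|y l IH]; simpl; [ring|]. rewrite IH; ring. Qed.

Lemma rsum_S lo hi f : (lo <= S hi)%nat -> rsum lo (S hi) f = rsum lo hi f + f (S hi).
Proof.
  intros H; unfold rsum. replace (S (S hi) - lo)%nat with (S (S hi - lo)) by lia.
  rewrite (seq_S (S hi - lo) lo), fold_app1. replace (lo + (S hi - lo))%nat with (S hi) by lia. reflexivity.
Qed.

Lemma rsum_empty lo hi f : (hi < lo)%nat -> rsum lo hi f = 0.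
Proof. intros H; unfold rsum. replace (S hi - lo)%nat with 0%nat by lia. reflexivity. Qed.

Lemma fold_prod_app1 (f : nat -> R) (l : list nat) x :
  fold_right (fun i acc => f i * acc) 1 (l ++ x :: nil) = fold_right (fun i acc => f i * acc) 1 l * f x.
Proof. induction l as [|y l IH]; simpl; [ring|]. rewrite IH; ring. Qed.

Lemma lfac_S k x : lfac (S k) x = lfac k x * (x - INR k) / INR (S k).
Proof.
  destruct k as [|k].
  - unfold lfac, lfactor, rprod. simpl. field.
  - unfold lfac, lfactor, rprod.
    replace (S (S k) - 1)%nat with (S k) by lia. replace (S k - 1)%nat with k by lia.
    replace (S (S k) - 0)%nat with (S (S k)) by lia. replace (S k - 0)%nat with (S k) by lia.
    rewrite (seq_S (S k) 0), fold_prod_app1.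
    change (fact (S (S k))) with (S (S k) * fact (S k))%nat.
    rewrite mult_INR. replace (0 + S k)%nat with (S k) by lia.
    assert (INR (fact (S k)) <> 0) by apply INR_fact_neq_0.
    assert (INR (S (S k)) <> 0) by (apply not_0_INR; lia).
    field. auto.
Qed.

Lemma ln_le' x y : 0 < x -> x <= y -> ln x <= ln y.
Proof. intros H1 H2; destruct H2 as [H2|H2]; [left; apply ln_increasing; auto| subst; lra]. Qed.
Lemma exp_le' x y : x <= y -> exp x <= exp y.
Proof. intros [H|H]; [left; apply exp_increasing; auto| subst; lra]. Qed.

Lemma ln_succ_le k : 0 < k -> ln (k + 1) <= ln k + / k.
Proof.
  intros Hk. rewrite <- (ln_exp (ln k + / k)). apply ln_le'; [lra|].
  rewrite exp_plus, exp_ln by lra. pose proof (exp_ineq1_le (/ k)).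
  assert (k * (1 + / k) = k + 1) by (field; lra).
  assert (0 < k) by lra. nra.
Qed.

Lemma x_exp_le x : x * exp (- x) <= / exp 1.
Proof.
  pose proof (exp_ineq1_le (x - 1)).
  assert (E : exp (-x) * exp (x-1) * exp 1 = 1).
  { rewrite <- !exp_plus. replace (- x + (x - 1) + 1) with 0 by ring. apply exp_0. }
  pose proof (exp_pos (x-1)). pose proof (exp_pos 1). pose proof (exp_pos (-x)).
  apply (Rmult_le_reg_r (exp 1)); auto. rewrite Rinv_l by lra.
  nra.
Qed.

Definition Q (a : R) k := Rabs (lfac k a).

Lemma Q1 a (Ha : 0 < a < 1) : Q a 1 = a.
Proof. unfold Q. rewrite lfac_S. simpl lfac. simpl INR. rewrite Rabs_right; lra. Qed.

Lemma QS a (Ha : 0 < a < 1) k : (1 <= k)%nat -> Q a (S k) = Q a k * (INR k - a) / INR (S k).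
Proof.
  intros Hk. unfold Q. rewrite lfac_S. unfold Rdiv.
  assert (1 <= INR k) by (apply (le_INR 1); auto).
  assert (0 < INR (S k)) by (apply lt_0_INR; lia).
  rewrite !Rabs_mult, Rabs_inv. rewrite (Rabs_right (INR (S k))) by lra.
  rewrite (Rabs_left1 (a - INR k)) by lra. ring.
Qed.

Lemma Q_nonneg a k : 0 <= Q a k.
Proof. apply Rabs_pos. Qed.

Lemma Q_exp a (Ha : 0 < a < 1) k : (1 <= k)%nat -> INR k * Q a k <= a * exp (- a * ln (INR k)).
Proof.
  induction k as [|k IH]; intros Hk; [lia|].
  destruct k as [|k].
  - rewrite (Q1 a Ha). simpl INR. rewrite ln_1. replace (- a * 0) with 0 by ring. rewrite exp_0. lra.
  - rewrite (QS a Ha) by lia. specialize (IH ltac:(lia)).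
    set (K := INR (S k)) in *.
    assert (HK : 1 <= K) by (unfold K; apply (le_INR 1); lia).
    replace (INR (S (S k))) with (K + 1) by (unfold K; rewrite (S_INR (S k)); ring).
    replace ((K + 1) * (Q a (S k) * (K - a) / (K + 1))) with (K * Q a (S k) * (1 - a / K)) by (field; lra).
    pose proof (ln_succ_le K ltac:(lra)).
    pose proof (exp_ineq1_le (- (a / K))).
    assert (0 < 1 - a / K). { apply Rlt_Rminus. apply (Rmult_lt_reg_r K); [lra|]. unfold Rdiv. rewrite Rmult_assoc, Rinv_l by lra. lra. }
    apply Rle_trans with (a * exp (- a * ln K) * exp (- (a / K))).
    + apply Rmult_le_compat; try lra. apply Rmult_le_pos; [lra| apply Q_nonneg].
    + rewrite Rmult_assoc, <- exp_plus. apply Rmult_le_compat_l; [lra|]. apply exp_le'.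
      unfold Rdiv. nra.
Qed.

Lemma Q_tel a (Ha : 0 < a < 1) J : rsum 1 J (Q a) = 1 - INR (S J) * Q a (S J) / a.
Proof.
  induction J as [|J IH].
  - rewrite rsum_empty by lia. rewrite (Q1 a Ha). simpl INR. field. lra.
  - rewrite rsum_S by lia. rewrite IH. rewrite (QS a Ha (S J)) by lia.
    assert (0 < INR (S (S J))) by (apply lt_0_INR; lia).
    field. lra.
Qed.

Lemma Q_sum_le a (Ha : 0 < a < 1) J : rsum 1 J (Q a) <= 1.
Proof.
  rewrite (Q_tel a Ha). assert (0 <= INR (S J) * Q a (S J) / a).
  { unfold Rdiv. apply Rmult_le_pos; [apply Rmult_le_pos; [apply pos_INR|apply Q_nonneg]|].
    left; apply Rinv_0_lt_compat; lra. }
  lra.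
Qed.

Lemma C_n0 n : Binomial.C n 0 = 1.
Proof. unfold Binomial.C. rewrite Nat.sub_0_r. simpl fact. simpl INR. field. apply INR_fact_neq_0. Qed.

Lemma C_pos n i : 0 < Binomial.C n i.
Proof.
  unfold Binomial.C. pose proof (lt_0_INR _ (lt_O_fact n)). pose proof (lt_0_INR _ (lt_O_fact i)).
  pose proof (lt_0_INR _ (lt_O_fact (n - i))).
  apply Rdiv_lt_0_compat; auto. apply Rmult_lt_0_compat; auto.
Qed.

Lemma F_bound n i s ab : (i + 2 <= n)%nat -> 0 < ab <= s -> s < 2 ->
  0 <= lfac i (INR n - s) /\
  lfac i (INR n - s) <= Binomial.C n i * exp (- ab * (ln (INR n + 1) - ln (INR (n - i) + 1))).
Proof.
  intros Hn Hab Hs. induction i as [|i IH].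
  - rewrite C_n0, Nat.sub_0_r. replace (- ab * (ln (INR n + 1) - ln (INR n + 1))) with 0 by ring.
    rewrite exp_0. simpl. lra.
  - destruct (IH ltac:(lia)) as [H0 H1]. clear IH.
    rewrite lfac_S, pascal_step3 by lia.
    assert (EM : INR (n - S i) + 1 = INR (n - i)).
    { replace (n - i)%nat with (S (n - S i)) by lia. rewrite S_INR. ring. }
    rewrite EM. set (M := INR (n - i)) in *.
    assert (HM : 3 <= M). { unfold M. replace 3 with (INR 3) by (simpl; ring). apply le_INR. lia. }
    assert (Hx : INR n - s - INR i = M - s).
    { unfold M. rewrite minus_INR by lia. ring. }
    rewrite Hx. assert (Hi : 0 < INR (S i)) by (apply lt_0_INR; lia).
    set (L1 := ln (INR n + 1)) in *.
    set (d := ln (M + 1) - ln M).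
    assert (Hd0 : 0 <= d). { unfold d. pose proof (ln_le' M (M+1) ltac:(lra) ltac:(lra)). lra. }
    assert (Hd1 : M * d <= 1).
    { unfold d. pose proof (ln_succ_le M ltac:(lra)).
      apply Rle_trans with (M * / M); [apply Rmult_le_compat_l; lra|]. rewrite Rinv_r by lra. lra. }
    assert (EE : exp (- ab * (L1 - ln M)) = exp (- ab * (L1 - ln (M + 1))) * exp (- (ab * d))).
    { rewrite <- exp_plus. f_equal. unfold d. ring. }
    set (E := exp (- ab * (L1 - ln (M + 1)))) in *.
    assert (HE : 0 < E) by apply exp_pos.
    pose proof (exp_ineq1_le (- (ab * d))).
    assert (Hk : M - s <= M * exp (- (ab * d))). { nra. }
    split.
    + unfold Rdiv. apply Rmult_le_pos; [apply Rmult_le_pos; lra|]. left; apply Rinv_0_lt_compat; lra.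
    + rewrite EE. pose proof (C_pos n i).
      replace (M / INR (S i) * Binomial.C n i * (E * exp (- (ab * d))))
          with (Binomial.C n i * E * (M * exp (- (ab * d))) / INR (S i)) by (field; lra).
      unfold Rdiv. apply Rmult_le_compat_r; [left; apply Rinv_0_lt_compat; lra|].
      apply Rle_trans with (Binomial.C n i * E * (M - s)).
      * apply Rmult_le_compat_r; lra.
      * apply Rmult_le_compat_l; [nra|]. lra.
Qed.

Lemma e_ge : 5/2 <= exp 1.
Proof.
  pose proof (exp_ineq1_le (1/8)).
  assert (exp (1/4) = exp (1/8) * exp (1/8)) by (rewrite <- exp_plus; f_equal; field).
  assert (exp (1/2) = exp (1/4) * exp (1/4)) by (rewrite <- exp_plus; f_equal; field).
  assert (exp 1 = exp (1/2) * exp (1/2)) by (rewrite <- exp_plus; f_equal; field).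
  assert (9/8 <= exp (1/8)) by lra.
  assert (81/64 <= exp (1/4)) by nra.
  assert (6561/4096 <= exp (1/2)) by nra.
  nra.
Qed.

Lemma lnn_gt n : (4 <= n)%nat -> 1 < ln (INR n).
Proof.
  intros H. rewrite <- ln_exp at 1. apply ln_increasing; [apply exp_pos|].
  pose proof exp_le_3. assert (4 <= INR n) by (replace 4 with (INR 4) by (simpl; ring); apply le_INR; auto). lra.
Qed.

Lemma term_bound n i1 j K as_ ab :
  (4 <= n)%nat -> (i1 + 4 <= n)%nat -> 0 < as_ < 1 -> 0 < ab < 1 ->
  (1 <= j)%nat -> (1 <= K)%nat -> (j + K = n - i1)%nat -> (n - i1 <= 2 * K)%nat ->
  Rabs (lfac i1 (INR n - (as_ + ab))) * Q as_ j * Q ab K <=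
  Binomial.C n (n - i1) / (exp 1 * (ln (INR n) - 1)) * Q as_ j * (2 / INR (n - i1)).
Proof.
  intros Hn Hi1 Has Hab Hj HK Hsum Hbig.
  destruct (F_bound n i1 (as_ + ab) ab ltac:(lia) ltac:(lra) ltac:(lra)) as [F0 F1].
  rewrite Rabs_right by lra.
  pose proof (Q_exp ab Hab K HK) as HQK.
  rewrite <- pascal_step1 by lia.
  set (m := INR (n - i1)) in *. set (k := INR K) in *.
  assert (Hm : 4 <= m) by (unfold m; replace 4 with (INR 4) by (simpl; ring); apply le_INR; lia).
  assert (Hk2 : 2 <= k) by (unfold k; replace 2 with (INR 2) by (simpl; ring); apply le_INR; lia).
  assert (Hmk : m <= 2 * k). { unfold m, k. replace 2 with (INR 2) by (simpl;ring). rewrite <- mult_INR. apply le_INR; lia. }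
  pose proof (lnn_gt n Hn) as Hln.
  pose proof e_ge. pose proof exp_le_3.
  set (L := ln (INR n + 1) - ln (m + 1) + ln k).
  assert (HL : ln (INR n) - 1 <= L).
  { unfold L. assert (0 < INR n) by (apply lt_0_INR; lia).
    pose proof (ln_le' (INR n) (INR n + 1) ltac:(lra) ltac:(lra)).
    assert (ln (m + 1) <= ln k + 1).
    { replace (ln k + 1) with (ln (k * exp 1)) by (rewrite ln_mult, ln_exp; [ring|lra|apply exp_pos]).
      apply ln_le'; nra. }
    lra. }
  set (C := Binomial.C n i1) in *. pose proof (C_pos n i1) as HC. fold C in HC.
  set (Qj := Q as_ j). assert (HQj : 0 <= Qj) by apply Q_nonneg.
  set (E := exp (- ab * (ln (INR n + 1) - ln (m + 1)))) in *.
  assert (HXL : ab * L * exp (- (ab * L)) <= / exp 1) by apply x_exp_le.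
  assert (Hsplit : exp (- ab * ln k) * E = exp (- (ab * L))).
  { unfold E. rewrite <- exp_plus. f_equal. unfold L. ring. }
  assert (HQKk : Q ab K <= ab * exp (- ab * ln k) / k).
  { apply (Rmult_le_reg_l k); [lra|]. unfold Rdiv. rewrite <- Rmult_assoc, (Rmult_comm k (ab * _)), Rmult_assoc, Rinv_r, Rmult_1_r by lra. exact HQK. }
  assert (HQK0 : 0 <= Q ab K) by apply Q_nonneg.
  apply Rle_trans with (C * E * Qj * (ab * exp (- ab * ln k) / k)).
  { apply Rmult_le_compat; try nra; try (apply Rmult_le_compat_r; lra). }
  replace (C * E * Qj * (ab * exp (- ab * ln k) / k)) with (C * Qj * / k * (ab * exp (- (ab * L)))).
  2:{ rewrite <- Hsplit. field. lra. }
  assert (HLp : 0 < L) by lra.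
  assert (Hb : ab * exp (- (ab * L)) <= / (exp 1 * (ln (INR n) - 1))).
  { rewrite Rinv_mult. apply (Rmult_le_reg_r L); [lra|].
    apply Rle_trans with (/ exp 1); [nra|].
    assert (0 < / exp 1) by (apply Rinv_0_lt_compat; lra).
    assert (1 <= / (ln (INR n) - 1) * L).
    { apply (Rmult_le_reg_l (ln (INR n) - 1)); [lra|]. rewrite <- Rmult_assoc, Rinv_r; lra. }
    nra. }
  assert (Hkm : / k <= 2 / m).
  { apply (Rmult_le_reg_r (k * m)); [nra|]. unfold Rdiv. field_simplify; lra. }
  assert (0 < / (exp 1 * (ln (INR n) - 1))) by (apply Rinv_0_lt_compat; nra).
  assert (0 < / k) by (apply Rinv_0_lt_compat; lra).
  assert (0 <= ab * exp (- (ab * L))) by (pose proof (exp_pos (- (ab * L))); nra).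
  unfold Rdiv.
  replace (C * / (exp 1 * (ln (INR n) - 1)) * Qj * (2 * / m)) with ((C * Qj) * (2 / m) * / (exp 1 * (ln (INR n) - 1))) by (unfold Rdiv; ring).
  assert (0 <= C * Qj) by nra.
  assert (0 <= C * Qj * / k) by nra.
  assert (C * Qj * / k <= C * Qj * (2 / m)) by (apply Rmult_le_compat_l; lra).
  apply Rmult_le_compat; lra.
Qed.

Lemma half_facts m : (2 * ((m - 1) / 2) <= m - 1 /\ m - 1 < 2 * ((m - 1) / 2) + 2)%nat.
Proof.
  pose proof (Nat.div_mod (m - 1) 2 ltac:(lia)). pose proof (Nat.mod_upper_bound (m - 1) 2 ltac:(lia)). lia.
Qed.

Lemma even_half m : Nat.even m = true -> (m / 2 = S ((m - 1) / 2) \/ m = 0)%nat /\ (2 * (m / 2) = m)%nat.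
Proof.
  intros H. apply Nat.even_spec in H. destruct H as [h ->].
  rewrite (Nat.mul_comm 2 h), Nat.div_mul by lia.
  pose proof (half_facts (h * 2)). split; [|lia].
  destruct h; [right; lia| left; lia].
Qed.

Lemma C0_bounds : 2 <= C0 /\ C0 < 5 / 2.
Proof.
  unfold C0. set (l := ln 2).
  assert (Hl0 : 0 < l). { unfold l. pose proof ln_lt_2. lra. }
  assert (Hl1 : l < 73/100).
  { unfold l. rewrite <- (ln_exp (73/100)). apply ln_increasing; [lra|].
    pose proof (exp_ineq1_le (73/800)).
    assert (exp (73/400) = exp (73/800) * exp (73/800)) by (rewrite <- exp_plus; f_equal; field).
    assert (exp (73/200) = exp (73/400) * exp (73/400)) by (rewrite <- exp_plus; f_equal; field).
    assert (exp (73/100) = exp (73/200) * exp (73/200)) by (rewrite <- exp_plus; f_equal; field).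
    assert (873/800 <= exp (73/800)) by lra.
    assert ((873/800)^2 <= exp (73/400)) by nra.
    assert ((873/800)^4 <= exp (73/200)) by nra.
    assert ((873/800)^8 <= exp (73/100)) by nra.
    nra. }
  split.
  - apply (Rmult_le_reg_r (4 * l + 12)); [lra|]. unfold Rdiv. rewrite Rmult_assoc, Rinv_l by lra. nra.
  - apply (Rmult_lt_reg_r (4 * l + 12)); [lra|]. unfold Rdiv. rewrite (Rmult_assoc (_ + _)), Rinv_l by lra. nra.
Qed.

Lemma per_i1 n i1 as_ (T : nat -> R) (mid : R) :
  (4 <= n)%nat -> (i1 + 4 <= n)%nat -> 0 < as_ < 1 ->
  (forall j, (1 <= j <= (n - i1 - 1) / 2)%nat ->
     T j <= Binomial.C n (n - i1) / (exp 1 * (ln (INR n) - 1)) * Q as_ j * (2 / INR (n - i1))) ->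
  mid <= Binomial.C n (n - i1) / (exp 1 * (ln (INR n) - 1)) * Q as_ (S ((n - i1 - 1) / 2)) * (2 / INR (n - i1)) ->
  rsum 1 ((n - i1 - 1) / 2) T + mid <=
  C0 / (exp 1 * (ln (INR n) - 1)) * (Binomial.C n (n - i1) * / INR (n - i1 - 1)).
Proof.
  intros Hn Hi1 Has HT Hmid.
  set (D := Binomial.C n (n - i1) / (exp 1 * (ln (INR n) - 1))) in *.
  set (J := ((n - i1 - 1) / 2)%nat) in *.
  set (m := INR (n - i1)) in *.
  assert (Hs : rsum 1 J T <= rsum 1 J (fun j => (D * (2 / m)) * Q as_ j)).
  { apply rsum_le. intros j Hj. rewrite HT by auto. lra. }
  rewrite <- rsum_scal in Hs.
  assert (Htot : rsum 1 J T + mid <= D * (2 / m) * rsum 1 (S J) (Q as_)).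
  { rewrite rsum_S by lia. lra. }
  pose proof (Q_sum_le as_ Has (S J)).
  pose proof (lnn_gt n Hn). pose proof e_ge. pose proof (C_pos n (n - i1)).
  assert (HD : 0 < D) by (unfold D; apply Rdiv_lt_0_compat; nra).
  assert (Hm : 4 <= m) by (unfold m; replace 4 with (INR 4) by (simpl; ring); apply le_INR; lia).
  assert (Em : INR (n - i1 - 1) = m - 1) by (unfold m; rewrite minus_INR by lia; simpl; ring).
  rewrite Em. destruct C0_bounds as [HC0 _].
  assert (0 <= rsum 1 (S J) (Q as_)).
  { replace 0 with (rsum 1 (S J) (fun _ => 0)).
    - apply rsum_le. intros. apply Q_nonneg.
    - unfold rsum. induction (seq 1 (S (S J) - 1)); simpl; [ring|]. rewrite IHl; ring. }
  apply Rle_trans with (D * (2 / m)). 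
  { assert (0 < D * (2 / m)) by (apply Rmult_lt_0_compat; [lra| apply Rdiv_lt_0_compat; lra]). nra. }
  replace (C0 / (exp 1 * (ln (INR n) - 1)) * (Binomial.C n (n - i1) * / (m - 1))) with (D * (C0 / (m - 1))).
  2:{ unfold D. field. split; [lra|]. split; nra. }
  apply Rmult_le_compat_l; [lra|].
  apply (Rmult_le_reg_r (m * (m - 1))); [nra|]. unfold Rdiv. field_simplify; try lra. nra.
Qed.

Theorem lemma22 (n : nat) (a1 a2 a3 : R) :
  (4 <= n)%nat -> 0 < a2 < 1 -> 0 < a3 < 1 -> a1 = 1 - a2 - a3 ->
  let l1 := (INR n - 1 + a1) / INR n in
  let l2 := a2 / INR n in
  let l3 := a3 / INR n in
  sigma1 n l1 l2 l3 <= bound_rhs n /\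
  sigma2 n l1 l2 l3 <= bound_rhs n /\
  C0 < 5 / 2.
Proof.
  intros Hn H2 H3 Ha1 l1 l2 l3.
  assert (Hn0 : 0 < INR n) by (apply lt_0_INR; lia).
  assert (E1 : INR n * l1 = INR n - (a2 + a3)) by (unfold l1; subst a1; field; lra).
  assert (E2 : INR n * l2 = a2) by (unfold l2; field; lra).
  assert (E3 : INR n * l3 = a3) by (unfold l3; field; lra).
  assert (LA : forall i1 i2 i3, Rabs (lagr n i1 i2 i3 l1 l2 l3) =
     Rabs (lfac i1 (INR n - (a2 + a3))) * Q a2 i2 * Q a3 i3).
  { intros. unfold lagr, Q. rewrite E1, E2, E3, !Rabs_mult. reflexivity. }
  assert (Hrhs : bound_rhs n = rsum 0 (n - 4) (fun i1 =>
      C0 / (exp 1 * (ln (INR n) - 1)) * (Binomial.C n (n - i1) * / INR (n - i1 - 1)))).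
  { unfold bound_rhs. rewrite rsum_scal. reflexivity. }
  split; [|split; [|apply C0_bounds]].
  - unfold sigma1. rewrite Hrhs. apply rsum_le. intros i1 Hi1.
    apply (per_i1 n i1 a2); auto; try lia.
    + intros j Hj. rewrite LA. pose proof (half_facts (n - i1)).
      apply term_bound; auto; lia.
    + unfold eps, pfrak. destruct (Nat.even (n - i1)) eqn:Ev.
      * destruct (even_half _ Ev) as [[Hh|Hh] Hh2]; [|lia].
        rewrite LA. rewrite <- Hh.
        assert (Ht := term_bound n i1 ((n - i1) / 2) ((n - i1) / 2) a2 a3 ltac:(lia) ltac:(lia) H2 H3
                   ltac:(lia) ltac:(lia) ltac:(lia) ltac:(lia)).
        assert (0 <= Rabs (lfac i1 (INR n - (a2 + a3))) * Q a2 ((n - i1) / 2) * Q a3 ((n - i1) / 2)).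
        { apply Rmult_le_pos; [apply Rmult_le_pos|]; try apply Rabs_pos; apply Q_nonneg. }
        lra.
      * replace ((1 - 1) / 2 * Rabs (lagr n i1 ((n - i1) / 2) ((n - i1) / 2) l1 l2 l3)) with 0 by field.
        pose proof (C_pos n (n - i1)). pose proof (lnn_gt n Hn). pose proof e_ge.
        pose proof (Q_nonneg a2 (S ((n - i1 - 1) / 2))).
        assert (0 < INR (n - i1)) by (apply lt_0_INR; lia).
        assert (0 < Binomial.C n (n - i1) / (exp 1 * (ln (INR n) - 1))) by (apply Rdiv_lt_0_compat; nra).
        assert (0 < 2 / INR (n - i1)) by (apply Rdiv_lt_0_compat; lra).
        apply Rmult_le_pos; [apply Rmult_le_pos|]; lra.
  - unfold sigma2. rewrite Hrhs. apply rsum_le. intros i1 Hi1.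
    apply (per_i1 n i1 a3); auto; try lia.
    + intros j Hj. rewrite LA. pose proof (half_facts (n - i1)).
      rewrite (Rplus_comm a2 a3), (Rmult_assoc _ (Q a2 _)), (Rmult_comm (Q a2 _)), <- Rmult_assoc.
      apply term_bound; auto; lia.
    + unfold eps, pfrak. destruct (Nat.even (n - i1)) eqn:Ev.
      * destruct (even_half _ Ev) as [[Hh|Hh] Hh2]; [|lia].
        rewrite LA. rewrite <- Hh.
        rewrite (Rplus_comm a2 a3), (Rmult_assoc _ (Q a2 _)), (Rmult_comm (Q a2 _)), <- Rmult_assoc.
        assert (Ht := term_bound n i1 ((n - i1) / 2) ((n - i1) / 2) a3 a2 ltac:(lia) ltac:(lia) H3 H2
                   ltac:(lia) ltac:(lia) ltac:(lia) ltac:(lia)).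
        assert (0 <= Rabs (lfac i1 (INR n - (a3 + a2))) * Q a3 ((n - i1) / 2) * Q a2 ((n - i1) / 2)).
        { apply Rmult_le_pos; [apply Rmult_le_pos|]; try apply Rabs_pos; apply Q_nonneg. }
        lra.
      * replace ((1 - 1) / 2 * Rabs (lagr n i1 ((n - i1) / 2) ((n - i1) / 2) l1 l2 l3)) with 0 by field.
        pose proof (C_pos n (n - i1)). pose proof (lnn_gt n Hn). pose proof e_ge.
        pose proof (Q_nonneg a3 (S ((n - i1 - 1) / 2))).
        assert (0 < INR (n - i1)) by (apply lt_0_INR; lia).
        assert (0 < Binomial.C n (n - i1) / (exp 1 * (ln (INR n) - 1))) by (apply Rdiv_lt_0_compat; nra).
        assert (0 < 2 / INR (n - i1)) by (apply Rdiv_lt_0_compat; lra).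
        apply Rmult_le_pos; [apply Rmult_le_pos|]; lra.
Qed.
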